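(* Let $G$ be a connected weighted multigraph on the vertex set $V$, $|V|\ge 2$, with positive edge weights and weighted adjacency matrix $A$. Let $i,j\in V$ be distinct. Then for every $t\in\bigl(0,(\rho(A_{jj}))^{-1}\bigr)$, the total weight $r_{ij(1)}(t)$ of all $i\to j$ hitting walks in $G(t)$ is finite and $$r_{ij(1)}(t)=\bigl(t^{-1}I-A_{jj}\bigr)^{-1}_i\,a_{\setminus j\,j}.$$
   Context: $G$ may have loops and multiple edges; $A=(a_{ij})$ has $a_{ij}$ equal to the sum of weights of the edges joining $i$ and $j$; $\rho(\cdot)$ denotes spectral radius. $G(t)$ is $G$ with all edge weights multiplied by $t$. A $v_0\to v_m$ walk is an alternating sequence of vertices and edges $v_0,e_1,v_1,\dots,e_m,v_m$ with $e_k$ joining $v_{k-1},v_k$; its weight is the product of its edge weights; a hitting $v_0\to v_m$ walk is one containing only one occurrence of $v_m$. Matrices are indexed by vertices; $A_{jj}$ is $A$ with row and column $j$ deleted (indexed by $V\setminus\{j\}$); $N^{-1}_i$ is the row of $N^{-1}$ indexed by $i$; $a_{\setminus j\,j}$ is column $j$ of $A$ with $a_{jj}$ removed. *)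

(* Defs.v *)
From HB Require Import structures.
From mathcomp Require Import all_boot all_order all_algebra.
From mathcomp Require Import all_classical all_reals all_analysis.
From mathcomp Require Import complex.
Unset Printing Implicit Defensive.
Import Order.TTheory GRing.Theory Num.Theory.
Local Open Scope ring_scope.

(* A finite weighted multigraph (loops and multiple edges allowed) on the
   vertex set 'I_N: a finite type E of edges, each edge e has two endpoints
   [ends e] (an unordered pair, stored as an ordered pair) and a weight [w e]. *)
Section Graph.
Variables (R : realType) (N : nat) (E : finType).
Variables (ends : E -> 'I_N * 'I_N) (w : E -> R).

Definition joins (e : E) (x y : 'I_N) : bool :=
  (ends e == (x, y)) || (ends e == (y, x)).

Definition connected_graph : Prop :=
  forall x y : 'I_N, connect (fun u v => [exists e, joins e u v]) x y.

Definition adjmx : 'M[R]_N := \matrix_(x, y) \sum_(e | joins e x y) w e.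

(* A walk of length m: vertices v_0..v_m and edges e_1..e_m
   (edge (k : 'I_m) is e_{k+1}). *)
Definition walk_t : Type :=
  {m : nat & ({ffun 'I_m.+1 -> 'I_N} * {ffun 'I_m -> E})%type}.

Definition wlen (p : walk_t) : nat := tag p.
Definition wvert (p : walk_t) : 'I_(wlen p).+1 -> 'I_N := (tagged p).1.
Definition wedge (p : walk_t) : 'I_(wlen p) -> E := (tagged p).2.

Definition is_walk (p : walk_t) : bool :=
  [forall k : 'I_(wlen p),
     joins (wedge p k) (wvert p (widen_ord (leqnSn _) k)) (wvert p (lift ord0 k))].

Definition hitting_walk (i j : 'I_N) (p : walk_t) : bool :=
  [&& is_walk p, wvert p ord0 == i, wvert p ord_max == j &
      [forall k : 'I_(wlen p).+1, (wvert p k == j) ==> (k == ord_max)]].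

(* weight of a walk in G(t) (all edge weights multiplied by t) *)
Definition walk_weight (t : R) (p : walk_t) : R :=
  \prod_(k < wlen p) (t * w (wedge p k)).

(* total weight r_{ij(1)}(t) of all hitting i -> j walks in G(t), as an
   extended real (a sum of nonnegative terms, possibly +oo) *)
Definition hitting_total (i j : 'I_N) (t : R) : \bar R :=
  (\esum_(p in [set p | hitting_walk i j p]) (walk_weight t p)%:E)%E.

End Graph.

Definition spectral_radius (R : realType) (n : nat) (M : 'M[R]_n) : R :=
  sup [set ComplexField.Normc.normc z | z in
        [set z : R[i] | root (map_poly (fun x : R => x%:C%C) (char_poly M)) z]].

(* Main.v *)
Require Import Defs.
From HB Require Import structures.
From mathcomp Require Import all_boot all_order all_algebra.
From mathcomp Require Import all_classical all_reals all_analysis.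
From mathcomp Require Import complex.
From mathcomp Require Import ring lra zify.
Import Order.TTheory GRing.Theory Num.Theory.
Local Open Scope ring_scope.

Lemma normc_ge0 (R : rcfType) (z : R[i]) : 0 <= ComplexField.Normc.normc z.
Proof. by case: z => a b /=; rewrite sqrtr_ge0. Qed.

Lemma normc_real (R : rcfType) (x : R) : ComplexField.Normc.normc (x%:C)%C = `|x|.
Proof. by rewrite /= expr0n /= addr0 sqrtr_sqr. Qed.

Lemma sum_seq_ge (R : realType) (T : eqType) (s : seq T) (f : T -> R) y :
  (forall v, 0 <= f v) -> y \in s -> f y <= \sum_(v <- s) f v.
Proof.
move=> f0; elim: s => // v s IH; rewrite inE big_cons => /orP[/eqP->|/IH h].
  by rewrite lerDl sumr_ge0.
by rewrite (le_trans h) // lerDr.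
Qed.

Lemma rho_bound (R : realType) n (M : 'M[R]_n) (z : R[i]) :
  root (map_poly (fun x : R => x%:C%C) (char_poly M)) z ->
  ComplexField.Normc.normc z <= spectral_radius R n M.
Proof.
move=> hz.
set p := map_poly _ _ in hz.
have [rs hrs] := closed_field_poly_normal p.
have lc : lead_coef p != 0.
  rewrite lead_coef_eq0; apply/eqP => p0.
  have : size p = size (char_poly M).
    by apply: size_map_poly.
  by rewrite p0 size_char_poly size_poly0.
have inrs y : root p y -> y \in rs.
  by rewrite hrs rootZ // root_prod_XsubC.
apply: sup_upper_bound; last by exists z.
split; first by exists (ComplexField.Normc.normc z); exists z.
exists (\sum_(v <- rs) ComplexField.Normc.normc v) => _ [y /= hy <-].
by apply: sum_seq_ge => //; [exact: normc_ge0 | exact: inrs].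
Qed.

Lemma unit_resolvent (R : realType) n (M : 'M[R]_n) (t : R) :
  0 < t -> t * spectral_radius R n M < 1 -> (t^-1%:M - M) \in unitmx.
Proof.
move=> t0 ht.
have nr : ~~ root (char_poly M) t^-1.
  apply/negP => hr.
  have hr' : root (map_poly (fun x : R => x%:C%C) (char_poly M)) (t^-1)%:C%C.
    by rewrite (rmorph_root (real_complex R)).
  have h := rho_bound _ _ _ _ hr'.
  rewrite normc_real ger0_norm in h; last by rewrite invr_ge0 ltW.
  have : 1 <= t * spectral_radius R n M.
    rewrite -(mulfV (lt0r_neq0 t0)); apply: ler_wpM2l h; exact: ltW.
  by move=> /(lt_le_trans ht); rewrite ltxx.
rewrite -eigenvalue_root_char /eigenvalue /eigenspace kermx_eq0 row_free_unit in nr.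
move: nr; rewrite negbK => hu.
have -> : t^-1%:M - M = - (M - t^-1%:M) by rewrite opprB.
by rewrite -scaleN1r unitmxZ // unitrN1.
Qed.
Lemma decay (R : realType) (a b : nat -> R) (c : R) :
  (forall M, 0 <= a M) -> 0 <= c -> c < 1 ->
  (forall M, a M.+1 <= c * a M + b M) ->
  (b n @[n --> \oo] --> 0)%classic -> (a n @[n --> \oo] --> 0)%classic.
Proof.
move=> a0 c0 c1 rec /cvgrPdist_lt hb; apply/cvgrPdist_lt => e e0.
have d0 : 0 < e * (1 - c) / 2 by rewrite divr_gt0 // mulr_gt0 // subr_gt0.
have [N _ hN] := hb _ d0.
have bnd d : a (N + d)%N <= c ^+ d * a N + e / 2.
  elim: d => [|d IH]; first by rewrite addn0 expr0 mul1r lerDl ltW // divr_gt0.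
  rewrite addnS (le_trans (rec _)) //.
  have hbN : b (N + d)%N <= e * (1 - c) / 2.
    have := hN (N + d)%N (leq_addr _ _); rewrite sub0r normrN => /ltW.
    exact: le_trans (ler_norm _).
  apply: le_trans (lerD (ler_wpM2l c0 IH) hbN) _.
  rewrite mulrDr mulrA -exprS -addrA lerD2l.
  nra.
have hg : (geometric (a N) c n @[n --> \oo] --> 0)%classic.
  by apply: cvg_geometric; rewrite ger0_norm.
have [N2 _ hN2] := (cvgrPdist_lt _ _).1 hg (e / 2) (divr_gt0 e0 (ltr0Sn _ 1)).
exists (N + N2)%N => // n /= hn.
rewrite sub0r normrN ger0_norm //.
have -> : n = (N + (n - N))%N by rewrite subnKC // (leq_trans (leq_addr _ _) hn).
apply: le_lt_trans (bnd _) _.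
have := hN2 (n - N)%N; rewrite /= leq_subRL ?(leq_trans (leq_addr _ _) hn) // addnC.
rewrite addnC in hn; move=> /(_ hn); rewrite sub0r normrN /geometric /= => h.
rewrite [X in _ < X](splitr e) ltrD2r.
by rewrite mulrC (le_lt_trans (ler_norm _)).
Qed.

Lemma mx_decay (R : realType) n' (A : 'M[R]_n'.+1) (t : R) :
  0 < t -> t * spectral_radius R n'.+1 A < 1 ->
  forall x y, ((t ^+ M * (A ^+ M) x y) @[M --> \oo] --> 0)%classic.
Proof.
move=> t0 ht x y.
pose f := real_complex R.
pose A' := map_mx f A.
have [rs hrs] := closed_field_poly_normal (char_poly A').
have hch : char_poly A' = \prod_(z <- rs) ('X - z%:P).
  by rewrite {1}hrs (monicP (char_poly_monic _)) scale1r.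
have zb z : z \in rs -> t * ComplexField.Normc.normc z < 1.
  move=> hz; apply: le_lt_trans ht; apply: ler_wpM2l; first exact: ltW.
  apply: rho_bound; rewrite (map_char_poly f) hch root_prod_XsubC //.
pose q k := \prod_(z <- take k rs) ('X - z%:P).
pose W k M := (t ^+ M)%:C%C *: horner_mx A' (q k * 'X^M).
pose nW k M := ComplexField.Normc.normc (W k M x y).
have rec k M : (k < size rs)%N ->
    W k M.+1 = t%:C%C *: W k.+1 M + (t%:C%C * nth 0 rs k) *: W k M.
  move=> hk.
  have pid : q k * 'X^(M.+1) = q k.+1 * 'X^M + nth 0 rs k *: (q k * 'X^M).
    rewrite /q (take_nth 0 hk) big_rcons /= exprSr -mul_polyC.
    set P := \prod_(_ <- _) _; set c := (rs`_k)%:P; set XM := 'X^M.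
    ring.
  rewrite /W pid linearD linearZ /= scalerDr !scalerA exprS rmorphM /=.
  by rewrite -!mulrA [rs`_k * _]mulrC.
have key d : (d <= size rs)%N -> (nW (size rs - d)%N M @[M --> \oo] --> 0)%classic.
  elim: d => [_|d IH hd].
    have h0 : nW (size rs) = fun=> 0.
      apply: funext => M; rewrite /nW /W /q take_size -hch rmorphM /= Cayley_Hamilton mul0r.
      by rewrite scaler0 mxE ComplexField.Normc.normc0.
    rewrite subn0 h0; exact: cvg_cst.
  have hk : (size rs - d.+1 < size rs)%N.
    lia.
  have e1 : (size rs - d.+1).+1 = (size rs - d)%N by rewrite subnSK.
  apply: (@decay _ _ (fun M => t * nW (size rs - d)%N M)
     (t * ComplexField.Normc.normc (nth 0 rs (size rs - d.+1)))).
  - by move=> M; exact: normc_ge0.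
  - by rewrite mulr_ge0 ?normc_ge0 // ltW.
  - by apply: zb; rewrite mem_nth.
  - move=> M; rewrite /nW rec // -e1 mxE.
    apply: le_trans (le_normcD _ _) _; rewrite addrC.
    have nt (s : R) : 0 <= s -> ComplexField.Normc.normc s%:C%C = s.
      by move=> s0; rewrite normc_real ger0_norm.
    rewrite !mxE !ComplexField.Normc.normcM !nt ?exprn_ge0 ?(ltW t0) //.
  - rewrite -(mulr0 t); apply: cvgMl_tmp; apply: IH; exact: ltnW.
have := key (size rs) (leqnn _); rewrite subnn.
move=> h; apply: norm_cvg0.
suff <- : nW 0%N = fun M => `|t ^+ M * (A ^+ M) x y| by [].
apply: funext => M.
rewrite /nW /W /q take0 big_nil mul1r [horner_mx A' _]rmorphXn /= horner_mx_X.
have -> : A' ^+ M = map_mx f (A ^+ M) by rewrite rmorphXn.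
by rewrite !mxE -rmorphM normc_real.
Qed.

Section Comb.
Local Set Implicit Arguments.
Local Unset Strict Implicit.
Definition ext (I : finType) m (g : {ffun 'I_m -> I}) (z : I) : {ffun 'I_m.+1 -> I} :=
  [ffun k => if unlift ord_max k is Some k' then g k' else z].

Lemma ext_lift (I : finType) m (g : {ffun 'I_m -> I}) z (k : 'I_m) :
  ext g z (lift ord_max k) = g k.
Proof. by rewrite ffunE liftK. Qed.

Lemma ext_max (I : finType) m (g : {ffun 'I_m -> I}) z : ext g z ord_max = z.
Proof. by rewrite ffunE unlift_none. Qed.

Lemma sum_ffunS (R : nmodType) (I : finType) m (F : {ffun 'I_m.+1 -> I} -> R) :
  \sum_f F f = \sum_(g : {ffun 'I_m -> I}) \sum_(z : I) F (ext g z).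
Proof.
rewrite pair_bigA /=.
pose h (p : {ffun 'I_m -> I} * I) := ext p.1 p.2.
pose hi (f : {ffun 'I_m.+1 -> I}) := ([ffun k => f (lift ord_max k)], f ord_max).
rewrite (reindex h) //; apply: onW_bij; exists hi.
  move=> [g z]; rewrite /h /hi /= ext_max; congr (_, _).
  by apply/ffunP => k; rewrite ffunE ext_lift.
move=> f; apply/ffunP => k; rewrite /h /hi /= ffunE.
by case: unliftP => [k'|] -> //; rewrite ffunE.
Qed.

Definition pprod (R : pzSemiRingType) N m (M : 'M[R]_N) (f : {ffun 'I_m.+1 -> 'I_N}) :=
  \prod_(k < m) M (f (widen_ord (leqnSn m) k)) (f (lift ord0 k)).

Lemma pprod_ext (R : comPzSemiRingType) N m (M : 'M[R]_N) (g : {ffun 'I_m.+1 -> 'I_N}) z :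
  pprod M (ext g z) = pprod M g * M (g ord_max) z.
Proof.
rewrite /pprod big_ord_recr /=; congr (_ * _).
  apply: eq_bigr => k _.
  have e1 : widen_ord (leqnSn m.+1) (widen_ord (leqnSn m) k) = lift ord_max (widen_ord (leqnSn m) k).
    by apply: val_inj; rewrite [RHS]lift_max.
  have e2 : lift ord0 (widen_ord (leqnSn m) k) = lift ord_max (lift ord0 k).
    by apply: val_inj; rewrite [RHS]lift_max.
  by rewrite e1 e2 !ext_lift.
have e1 : widen_ord (leqnSn m.+1) ord_max = lift ord_max (ord_max : 'I_m.+1).
  by apply: val_inj; rewrite [RHS]lift_max.
have e2 : lift ord0 (ord_max : 'I_m.+1) = ord_max by apply: val_inj.
by rewrite e1 e2 ext_lift ext_max.
Qed.

Lemma path_sum (R : comNzRingType) N' (M : 'M[R]_N'.+1) m x y :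
  \sum_(f : {ffun 'I_m.+1 -> 'I_N'.+1} | (f ord0 == x) && (f ord_max == y)) pprod M f
  = (M ^+ m) x y.
Proof.
elim: m x y => [|m IH] x y.
  rewrite big_mkcond sum_ffunS /=.
  have -> : (ord0 : 'I_1) = ord_max by apply: val_inj.
  under eq_bigr => g _ do under eq_bigr => z _ do rewrite ext_max /pprod big_ord0.
  rewrite sumr_const card_ffun card_ord card_ord expn0 mulr1n expr0 mxE.
  rewrite -big_mkcond /=.
  case: eqP => [->|nxy].
    by rewrite (eq_bigl (fun z => z == y)) ?big_pred1_eq // => z; rewrite andbb.
  by rewrite big_pred0 // => z; apply/andP => [[/eqP -> /eqP]].
rewrite big_mkcond sum_ffunS /=.
have e0 : (ord0 : 'I_m.+2) = lift ord_max ord0 by apply: val_inj.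
under eq_bigr => g _ do under eq_bigr => z _ do rewrite e0 ext_lift ext_max pprod_ext.
rewrite exprSr mxE.
under [RHS]eq_bigr => w _ do rewrite -IH mulr_suml.
symmetry.
transitivity (\sum_w \sum_(g : {ffun 'I_m.+1 -> 'I_N'.+1} | (g ord0 == x) && (g ord_max == w))
   pprod M g * M (g ord_max) y).
  by apply: eq_bigr => w _; apply: eq_bigr => g /andP[_ /eqP ->].
rewrite -(partition_big (fun g : {ffun 'I_m.+1 -> 'I_N'.+1} => g ord_max) predT) //=.
rewrite big_mkcond; apply: eq_bigr => g _.
case: (g ord0 == x) => /=; last by rewrite big1.
by rewrite -big_mkcond /= big_pred1_eq.
Qed.

Lemma prod_cond (R : comNzRingType) (I : finType) (b : pred I) (F : I -> R) :
  \prod_i (if b i then F i else 0) = if [forall i, b i] then \prod_i F i else 0.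
Proof.
case: (boolP [forall i, b i]) => [/forallP hb|hnb].
  by apply: eq_bigr => i _; rewrite hb.
rewrite negb_forall in hnb; case/existsP: hnb => i /negbTE hi.
by rewrite (bigD1 i) //= hi mul0r.
Qed.

Lemma edge_sum (R : realType) N (E : finType) (ends : E -> 'I_N * 'I_N) (w : E -> R)
   (t : R) m (a b : 'I_m -> 'I_N) :
  \sum_(g : {ffun 'I_m -> E} | [forall k, joins N E ends (g k) (a k) (b k)])
     \prod_(k < m) (t * w (g k))
  = \prod_(k < m) (t * adjmx R N E ends w (a k) (b k)).
Proof.
under [RHS]eq_bigr => k _ do rewrite mxE mulr_sumr big_mkcond.
rewrite bigA_distr_bigA /= big_mkcond; apply: eq_bigr => g _.
by rewrite prod_cond.
Qed.

Lemma nohitE N m (f : {ffun 'I_m.+1 -> 'I_N}) (j : 'I_N) :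
  [forall k : 'I_m.+1, (f k == j) ==> (k == ord_max)] =
  [forall k : 'I_m, f (widen_ord (leqnSn m) k) != j].
Proof.
apply/forallP/forallP => h k.
  apply/negP => /eqP hk; have := h (widen_ord (leqnSn m) k).
  rewrite hk eqxx /= => /eqP /(congr1 val) /= hkm.
  by move: (ltn_ord k); rewrite hkm ltnn.
apply/implyP => /eqP hk; case: (unliftP ord_max k) hk => [k' ->|-> //].
have -> : lift ord_max k' = widen_ord (leqnSn m) k' by apply: val_inj; rewrite [LHS]lift_max.
by move=> hk; have := h k'; rewrite hk eqxx.
Qed.

Definition Mpp (R : realType) N (E : finType) (ends : E -> 'I_N * 'I_N) (w : E -> R)
  (t : R) (j : 'I_N) : 'M[R]_N :=
  \matrix_(x, y) if x == j then 0 else t * adjmx R N E ends w x y.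

Lemma walks_m (R : realType) N (E : finType) (ends : E -> 'I_N * 'I_N) (w : E -> R)
   (t : R) (i j : 'I_N) m :
  \sum_(p : {ffun 'I_m.+1 -> 'I_N} * {ffun 'I_m -> E} |
       hitting_walk N E ends i j (existT _ m p))
     walk_weight R N E w t (existT _ m p)
  = \sum_(f : {ffun 'I_m.+1 -> 'I_N} | (f ord0 == i) && (f ord_max == j))
      pprod (Mpp ends w t j) f.
Proof.
rewrite (eq_bigl (fun p : {ffun 'I_m.+1 -> 'I_N} * {ffun 'I_m -> E} => [&& p.1 ord0 == i, p.1 ord_max == j &
   [forall k : 'I_m.+1, (p.1 k == j) ==> (k == ord_max)]] &&
   [forall k, joins N E ends (p.2 k) (p.1 (widen_ord (leqnSn m) k)) (p.1 (lift ord0 k))])); last first.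
  by move=> p; rewrite /hitting_walk andbC -!andbA.
rewrite (eq_bigr (fun p : {ffun 'I_m.+1 -> 'I_N} * {ffun 'I_m -> E} =>
   \prod_(k < m) (t * w (p.2 k)))) //.
rewrite -(pair_big_dep (fun f : {ffun 'I_m.+1 -> 'I_N} => [&& f ord0 == i, f ord_max == j &
   [forall k : 'I_m.+1, (f k == j) ==> (k == ord_max)]])
  (fun (f : {ffun 'I_m.+1 -> 'I_N}) (g : {ffun 'I_m -> E}) =>
   [forall k, joins N E ends (g k) (f (widen_ord (leqnSn m) k)) (f (lift ord0 k))])
  (fun (f : {ffun 'I_m.+1 -> 'I_N}) (g : {ffun 'I_m -> E}) =>
   \prod_(k < m) (t * w (g k)))) /=.
rewrite big_mkcond [RHS]big_mkcond; apply: eq_bigr => f _.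
rewrite /=; case: (f ord0 == i) => //=; case: (f ord_max == j) => //=.
rewrite edge_sum /pprod.
under [X in _ = X]eq_bigr => k _ do rewrite mxE -if_neg.
by rewrite prod_cond nohitE.
Qed.

Lemma Mpp_pow (R : realType) n' (E : finType) (ends : E -> 'I_n'.+2 * 'I_n'.+2) (w : E -> R)
   (t : R) (j : 'I_n'.+2) m (k k' : 'I_n'.+1) :
  (Mpp ends w t j ^+ m) (lift j k) (lift j k') =
  ((t *: row' j (col' j (adjmx R n'.+2 E ends w))) ^+ m) k k'.
Proof.
elim: m k k' => [|m IH] k k'.
  by rewrite !expr0 !mxE (inj_eq (@lift_inj _ j)).
rewrite !exprSr !mxE (bigD1_ord j) //= [Mpp _ _ _ _ _ _]mxE eqxx mulr0 add0r.
apply: eq_bigr => k'' _; rewrite IH !mxE [lift j _ == j]eq_sym (negbTE (neq_lift _ _)).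
by [].
Qed.

Lemma Mpp_last (R : realType) n' (E : finType) (ends : E -> 'I_n'.+2 * 'I_n'.+2) (w : E -> R)
   (t : R) (j : 'I_n'.+2) m (k : 'I_n'.+1) :
  (Mpp ends w t j ^+ m.+1) (lift j k) j =
  ((t *: row' j (col' j (adjmx R n'.+2 E ends w))) ^+ m *m
     (t *: row' j (col j (adjmx R n'.+2 E ends w)))) k 0.
Proof.
rewrite !exprSr !mxE (bigD1_ord j) //= [Mpp _ _ _ _ _ _]mxE eqxx mulr0 add0r.
apply: eq_bigr => k'' _; rewrite Mpp_pow !mxE [lift j _ == j]eq_sym (negbTE (neq_lift _ _)).
by [].
Qed.

End Comb.

Section Esum.
Local Open Scope classical_set_scope.
Lemma esum_finT (R : realType) (T : finType) (P : pred T) (f : T -> R) :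
  (forall x, 0 <= f x) ->
  (\esum_(x in [set x | P x]) (f x)%:E = (\sum_(x | P x) f x)%:E)%E.
Proof.
move=> f0; rewrite esum_fset; last 2 first.
- exact: finite_finset.
- by move=> x _; rewrite lee_fin.
have -> : [set x | P x] = [set` [seq x <- enum T | P x]].
  by apply/seteqP; split => x /=; rewrite mem_filter mem_enum andbT.
rewrite -fsbig_seq; last exact: filter_uniq (enum_uniq _).
rewrite big_filter big_enum_cond sumEFin.
by congr (_%:E); apply: eq_bigl => x.
Qed.

Lemma hitting_series (R : realType) N (E : finType) (ends : E -> 'I_N * 'I_N) (w : E -> R)
   (i j : 'I_N) (t : R) :
  0 <= t -> (forall e, 0 <= w e) ->
  hitting_total R N E ends w i j t =
  (\sum_(0 <= m <oo)
    (\sum_(p : {ffun 'I_m.+1 -> 'I_N} * {ffun 'I_m -> E} |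
        hitting_walk N E ends i j (existT _ m p))
      walk_weight R N E w t (existT _ m p))%:E)%E.
Proof.
move=> t0 w0.
have ww0 p : 0 <= walk_weight R N E w t p.
  by apply: prodr_ge0 => k _; rewrite mulr_ge0.
pose Q m := [set q : {ffun 'I_m.+1 -> 'I_N} * {ffun 'I_m -> E} |
   hitting_walk N E ends i j (existT _ m q)].
pose J m := [set existT (fun m => ({ffun 'I_m.+1 -> 'I_N} * {ffun 'I_m -> E})%type) m q
   | q in Q m].
have HJ : [set p | hitting_walk N E ends i j p] = \bigcup_(m in setT) J m.
  apply/seteqP; split => [[m q] /= hq | _ [m _ [q hq <-]] //].
  by exists m => //; exists q.
rewrite /hitting_total HJ esum_bigcupT; last 2 first.
- move=> m1 m2 _ _ [p [[q1 _ e1] [q2 _ e2]]].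
  exact: (congr1 tag (etrans e1 (esym e2))).
- by move=> p; rewrite lee_fin.
rewrite -nneseries_esumT; last by move=> m; apply: esum_ge0 => p _; rewrite lee_fin.
apply: eq_eseriesr => m _.
rewrite esum_image; last first.
  move=> q1 q2 _ _ /= h.
  exact: (Eqdep_dec.inj_pair2_eq_dec _ PeanoNat.Nat.eq_dec _ _ _ _ h).
exact: esum_finT.
Qed.
End Esum.


Import numFieldNormedType.Exports.
Local Open Scope ring_scope.

Lemma cvg_sum0 (R : realType) (I : finType) (u : I -> nat -> R) :
  (forall i, (u i M @[M --> \oo] --> 0)%classic) ->
  ((\sum_i u i M) @[M --> \oo] --> 0)%classic.
Proof.
move=> h.
have := @cvg_big R^o I (fun x y => x + y) 0 predT
  (@pseudometric_normed_Zmodule.add_continuous R R^o) nat (\oo)%classic (index_enum I) u (fun=> 0).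
by rewrite big1 //; apply => // i _; exact: h.
Qed.

Theorem lemma6 (R : realType) (n : nat) (E : finType)
    (ends : E -> 'I_n.+1 * 'I_n.+1) (w : E -> R)
    (hV : (1 <= n)%N)
    (hw : forall e : E, 0 < w e)
    (hconn : connected_graph n.+1 E ends)
    (i j : 'I_n.+1) (hij : i != j)
    (t : R) (ht0 : 0 < t)
    (ht : t * spectral_radius R n (row' j (col' j (adjmx R n.+1 E ends w))) < 1) :
  forall k : 'I_n, lift j k = i ->
    hitting_total R n.+1 E ends w i j t
    = ((invmx (t^-1%:M - row' j (col' j (adjmx R n.+1 E ends w)))
         *m row' j (col j (adjmx R n.+1 E ends w))) k 0)%:E.
Proof.
destruct n as [|n']; first by [].
move=> k hk.
set A := adjmx R n'.+2 E ends w in ht *.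
set Ajj := row' j (col' j A) in ht *.
set a := row' j (col j A).
have t0 : 0 <= t by exact: ltW.
have w0 e : 0 <= w e by exact: ltW.
pose c (m : nat) : R := (Mpp ends w t j ^+ m) i j.
have cE m : c m = \sum_(p : {ffun 'I_m.+1 -> 'I_n'.+2} * {ffun 'I_m -> E} |
        hitting_walk n'.+2 E ends i j (existT _ m p))
      walk_weight R n'.+2 E w t (existT _ m p).
  by rewrite walks_m path_sum.
rewrite hitting_series // (eq_eseriesr (g := fun m => (c m)%:E)); last first.
  by move=> m _; rewrite cE.
have Xu := unit_resolvent R n'.+1 Ajj t ht0 ht.
set Y := invmx (t^-1%:M - Ajj).
have ps M : \sum_(m < M.+1) c m =
    (Y *m a) k 0 - (Y *m (t ^+ M *: Ajj ^+ M) *m a) k 0.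
  rewrite big_ord_recl {1}/c -hk expr0 mxE eq_sym (negbTE (neq_lift _ _)) mulr0n add0r.
  rewrite (eq_bigr (fun l : 'I_M => ((t *: Ajj) ^+ l *m (t *: a)) k 0)); last first.
    by move=> l _; rewrite /c -hk lift0 Mpp_last.
  rewrite -summxE -mulmx_suml.
  have hS : \sum_(l < M) (t *: Ajj) ^+ l = t^-1 *: (Y * (1 - (t *: Ajj) ^+ M)).
    have hBX : 1 - t *: Ajj = t *: (t^-1%:M - Ajj).
      by rewrite scalerBr scale_scalar_mx mulfV ?gt_eqF.
    have YX : Y * (t^-1%:M - Ajj) = 1 by rewrite -mulmxE mulVmx.
    have e1 : 1 - (t *: Ajj) ^+ M = (1 - t *: Ajj) * \sum_(l < M) (t *: Ajj) ^+ l.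
      by rewrite -opprB subrX1 -mulNr opprB.
    rewrite e1 hBX -scalerAl -scalerAr mulrA YX mul1r scalerA mulVf ?gt_eqF // scale1r.
    by [].
  rewrite hS exprZn -scalemxAl -scalemxAr scalerA mulVf ?gt_eqF // scale1r.
  by rewrite -mulmxE mulmxBr mulmx1 mulmxBl !mxE.
have hd : ((Y *m (t ^+ M *: Ajj ^+ M) *m a) k 0 @[M --> \oo] --> 0)%classic.
  have e M : (Y *m (t ^+ M *: Ajj ^+ M) *m a) k 0 =
      \sum_y (\sum_z Y k z * (t ^+ M * (Ajj ^+ M) z y)) * a y 0.
    by rewrite !mxE; apply: eq_bigr => y _; rewrite !mxE; congr (_ * _);
      apply: eq_bigr => z _; rewrite !mxE.
  have -> : (fun M => (Y *m (t ^+ M *: Ajj ^+ M) *m a) k 0) =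
    (fun M => \sum_y (\sum_z Y k z * (t ^+ M * (Ajj ^+ M) z y)) * a y 0).
    by apply: funext => M; exact: e.
  apply: (@cvg_sum0 _ _ (fun y M => (\sum_z Y k z * (t ^+ M * (Ajj ^+ M) z y)) * a y 0)) => y.
  have h : ((\sum_z Y k z * (t ^+ M * (Ajj ^+ M) z y)) @[M --> \oo] --> 0)%classic.
    apply: (@cvg_sum0 _ _ (fun z M => Y k z * (t ^+ M * (Ajj ^+ M) z y))) => z.
    have := cvgMl_tmp (a := Y k z) (mx_decay R n' Ajj t ht0 ht z y).
    by rewrite mulr0; apply.
  by have := cvgMr_tmp (b := a y 0) h; rewrite mul0r; apply.
have hs : ((\sum_(m < M) c m) @[M --> \oo] --> ((Y *m a) k 0 : R))%classic.
  rewrite -cvg_shiftS /=.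
  have -> : (fun M => \sum_(m < M.+1) c m) =
      (fun M => (Y *m a) k 0 - (Y *m (t ^+ M *: Ajj ^+ M) *m a) k 0).
    by apply: funext => M; exact: ps.
  have := cvgB (@cvg_cst _ ((Y *m a) k 0 : R) _ (\oo)%classic _) hd.
  by rewrite subr0; apply.
apply: cvg_lim => //.
have -> : (fun N => \sum_(0 <= m < N) (c m)%:E) = (fun N => (\sum_(m < N) c m)%:E).
  by apply: funext => N; rewrite sumEFin big_mkord.
apply: cvg_EFin; last exact: hs.
by apply: nearW => N.
Qed.
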